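(* Let $u$ and $\hat u=u+v$ be quasidefinite, with $$\langle P(x),Q(y)\rangle_v=\sum_{b=1}^{\tilde q}\sum_{l=0}^{\tilde\kappa^{(b)}-1}\sum_{j=1}^q\sum_{m=0}^{\kappa^{(j)}-1}\frac1{l!\,m!}P^{(l)}(\tilde x_b)\,\beta^{(b,j)}_{l,m}\,\big(Q^{(m)}(x_j)\big)^\top,$$ assume the functionals $(\beta^{(j)}_m)_x=\sum_{b,l}\beta^{(b,j)}_{l,m}\frac{(-1)^l}{l!}\delta^{(l)}(x-\tilde x_b)$ are linearly independent, and assume $\tilde{\mathbb I}^{\perp^R_u}=\{0_p\}$ or $\mathbb I^{\perp^L_u}=\{0_p\}$. Then for every $n\ge1$ the matrices $I_{Np}+\tilde{\mathcal J}_{K_{n-1}}\beta$ and $I_{\tilde Np}+\beta\tilde{\mathcal J}_{K_{n-1}}$ are nonsingular and $$\hat P^{[1]}_n(x)=P^{[1]}_n(x)-\tilde{\mathcal J}_{P^{[1]}_n}(I_{\tilde Np}+\beta\tilde{\mathcal J}_{K_{n-1}})^{-1}\beta\,\mathcal J^{[0,1]}_{K_{n-1}}(x),$$ $$(\hat P^{[2]}_n(y))^\top=(P^{[2]}_n(y))^\top-\tilde{\mathcal J}^{[1,0]}_{K_{n-1}}(y)(I_{\tilde Np}+\beta\tilde{\mathcal J}_{K_{n-1}})^{-1}\beta(\mathcal J_{P^{[2]}_n})^\top,$$ $$\hat H_n=H_n+\tilde{\mathcal J}_{P^{[1]}_n}(I_{\tilde Np}+\beta\tilde{\mathcal J}_{K_{n-1}})^{-1}\beta(\mathcal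 J_{P^{[2]}_n})^\top .$$
   Context: $p\ge1$ fixed, ${}^\top$ transpose. $x_1,\dots,x_q$ distinct real with multiplicities $\kappa^{(j)}$, $N=\sum\kappa^{(j)}$; $\tilde x_1,\dots,\tilde x_{\tilde q}$ distinct real with multiplicities $\tilde\kappa^{(b)}$, $\tilde N=\sum\tilde\kappa^{(b)}$; $\beta^{(b,j)}_{l,m}\in\mathbb C^{p\times p}$. A matrix of generalized kernels $w_{x,y}$ defines $(\langle P(x),Q(y)\rangle_w)_{i,j}=\sum_{k,l}\langle (w_{x,y})_{k,l},P_{i,k}(x)Q_{j,l}(y)\rangle$; quasidefinite means all leading block truncations of $(\langle I_px^k,I_py^l\rangle_w)_{k,l\ge0}$ are nonsingular; then $G=S_1^{-1}HS_2^{-\top}$ (unique, $S_i$ block lower unitriangular, $H=\operatorname{diag}(H_n)$) gives monic $P^{[i]}_n(x)=\sum_{k\le n}(S_i)_{n,k}x^k$ with $\langle P^{[1]}_n,P^{[2]}_m\rangle_w=\delta_{n,m}H_n$ and $K_n(x,y)=\sum_{k=0}^n(P^{[2]}_k(y))^\top H_k^{-1}P^{[1]}_k(x)$; hats denote objects of $\hat u$. Pairing $(\langle P,\beta_x\rangle)_{i,l}=\sum_k\langle(\beta_x)_{k,l},P_{i,k}\rangle$, with $\delta^{(l)}(x-a):f\mapsto(-1)^lf^{(l)}(a)$. Linear independence: $\sum_{j,m}(\beta^{(j)}_m)_xX^{(j)}_m=0\Rightarrow$ all $X^{(j)}_m=0_p$, and $\sum_{j,m}Y^{(j)}_m(\beta^{(j)}_m)_x=0\Rightarrow$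 all $Y^{(j)}_m=0_p$ ($X,Y\in\mathbb C^{p\times p}$). $\mathbb I=(x-x_1)^{\kappa^{(1)}}\cdots(x-x_q)^{\kappa^{(q)}}\mathbb C^{p\times p}[x]$, $\tilde{\mathbb I}=(x-\tilde x_1)^{\tilde\kappa^{(1)}}\cdots(x-\tilde x_{\tilde q})^{\tilde\kappa^{(\tilde q)}}\mathbb C^{p\times p}[x]$; $S^{\perp^R_u}=\{Q:\langle P(x),Q(y)\rangle_u=0\ \forall P\in S\}$, $S^{\perp^L_u}=\{Q:\langle Q(x),P(y)\rangle_u=0\ \forall P\in S\}$. Matrices (index pairs ordered lexicographically): $\beta\in\mathbb C^{\tilde Np\times Np}$ with block in row $(b,l)$, $0\le l\le\tilde\kappa^{(b)}-1$, and column $(j,m)$, $0\le m\le\kappa^{(j)}-1$, equal to $\beta^{(b,j)}_{l,m}$. $\mathcal J_f\in\mathbb C^{p\times Np}$: block row with $(j,m)$ block $f^{(m)}(x_j)/m!$. $\tilde{\mathcal J}_f\in\mathbb C^{p\times\tilde Np}$: block row with $(b,l)$ block $f^{(l)}(\tilde x_b)/l!$. For a kernel $K$: $\mathcal J^{[0,1]}_K(x)\in\mathbb C^{Np\times p}$ block column with $(j,m)$ block $\frac1{m!}\partial_y^mK(x,y)|_{y=x_j}$; $\tilde{\mathcal J}^{[1,0]}_K(y)\in\mathbb C^{p\times\tilde Np}$ block row with $(b,l)$ block $\frac1{l!}\partial_x^lK(x,y)|_{x=\tilde x_b}$; $\tilde{\mathcal J}_K\in\mathbb C^{Np\times\tilde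 Np}$ with block in row $(j,m)$, column $(b,l)$ equal to $\frac1{l!\,m!}\partial_x^l\partial_y^mK(x,y)|_{x=\tilde x_b,y=x_j}$. *)

(* Defs.v *)
From mathcomp Require Import all_boot all_algebra.
From mathcomp Require Import complex reals.
Set Implicit Arguments.
Unset Strict Implicit.
Unset Printing Implicit Defensive.
Import GRing.Theory Num.Theory.
Local Open Scope ring_scope.

Definition toC (R : realType) (r : R) : R[i] := Complex r 0.

Section Defs.
Variable C : fieldType.
Variable p : nat.

(* matrix polynomials P(x) = (P_{i,k}(x)) are elements of 'M[{poly C}]_p *)

(* the bilinear form <P(x),Q(y)>_w of a p x p matrix of generalized kernels
   w_{x,y}, given by its moments  G a b k l = < (w_{x,y})_{k,l}, x^a y^b >,
   i.e.  (<P,Q>_w)_{i,j} = sum_{k,l} < (w)_{k,l}, P_{i,k}(x) Q_{j,l}(y) >  *)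
Definition formU (G : nat -> nat -> 'M[C]_p) (P Q : 'M[{poly C}]_p) : 'M[C]_p :=
  \matrix_(i, j) \sum_(k < p) \sum_(l < p)
     \sum_(a < size (P i k)) \sum_(b < size (Q j l))
        (P i k)`_a * G a b k l * (Q j l)`_b.

Definition mderiv_at (l : nat) (f : 'M[{poly C}]_p) (c : C) : 'M[C]_p :=
  map_mx (fun e => (e^`(l)).[c]) f.

Definition formV (q qt : nat) (x : 'I_q -> C) (k : 'I_q -> nat)
    (xt : 'I_qt -> C) (kt : 'I_qt -> nat)
    (beta : 'I_qt -> 'I_q -> nat -> nat -> 'M[C]_p)
    (P Q : 'M[{poly C}]_p) : 'M[C]_p :=
  \sum_(b < qt) \sum_(l < kt b) \sum_(j < q) \sum_(m < k j)
     (((l`!)%:R)^-1 * ((m`!)%:R)^-1) *: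
       (mderiv_at l P (xt b) *m beta b j l m *m (mderiv_at m Q (x j))^T).

Definition moment (B : 'M[{poly C}]_p -> 'M[{poly C}]_p -> 'M[C]_p)
  (a b : nat) : 'M[C]_p := B ('X^a)%:M ('X^b)%:M.

Definition quasidefinite (B : 'M[{poly C}]_p -> 'M[{poly C}]_p -> 'M[C]_p)
  : Prop :=
  forall n : nat, \det (\mxblock_(a < n, b < n) moment B a b) != 0.

(* G = S1^{-1} H S2^{-T} with S1, S2 block lower unitriangular and
   H = diag(H_n), written equivalently (all products are finite sums) as
   S1 G S2^T = H. *)
Definition gauss_factorization (M : nat -> nat -> 'M[C]_p)
  (S1 S2 : nat -> nat -> 'M[C]_p) (H : nat -> 'M[C]_p) : Prop :=
  [/\ forall n, S1 n n = 1%:M /\ S2 n n = 1%:M,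
      forall n m, (n < m)%N -> S1 n m = 0 /\ S2 n m = 0 &
      forall n m, \sum_(a < n.+1) \sum_(b < m.+1)
                     S1 n a *m M a b *m (S2 m b)^T
                  = if n == m then H n else 0 ].

Definition polOf (S : nat -> nat -> 'M[C]_p) (n : nat) : 'M[{poly C}]_p :=
  \sum_(j < n.+1) ('X^j *: map_mx polyC (S n j)).

(* Bivariate matrix polynomials K(x,y) : 'M[{poly {poly C}}]_p, where the
   inner variable is x and the outer variable is y. *)
Definition liftX (P : 'M[{poly C}]_p) : 'M[{poly {poly C}}]_p :=
  map_mx polyC P.
Definition liftY (P : 'M[{poly C}]_p) : 'M[{poly {poly C}}]_p :=
  map_mx (map_poly polyC) P.

Definition kernelK (S1 S2 : nat -> nat -> 'M[C]_p) (H : nat -> 'M[C]_p)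
  (n : nat) : 'M[{poly {poly C}}]_p :=
  \sum_(j < n.+1) ((liftY (polOf S2 j))^T
                   *m map_mx (fun c => c%:P%:P) (invmx (H j))
                   *m liftX (polOf S1 j)).

Section Jets.
Variables (q : nat) (pts : 'I_q -> C) (mult : 'I_q -> nat).

Definition jetRow (f : 'M[{poly C}]_p) :
    'M[C]_(p, \sum_(j < q) \sum_(m < mult j) p) :=
  \mxrow_(j < q) \mxrow_(m < mult j)
     (((m`!)%:R)^-1 *: mderiv_at m f (pts j)).

(* J^{[0,1]}_K(x) : block column with (j,m) block
   1/m! d_y^m K(x,y) |_{y = x_j}  (a matrix polynomial in x) *)
Definition jet01 (K : 'M[{poly {poly C}}]_p) :
    'M[{poly C}]_(\sum_(j < q) \sum_(m < mult j) p, p) :=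
  \mxcol_(j < q) \mxcol_(m < mult j)
     map_mx (fun e => ((m`!)%:R)^-1 *: (e^`(m)).[(pts j)%:P]) K.

(* J^{[1,0]}_K(y) : block row with (b,l) block
   1/l! d_x^l K(x,y) |_{x = xt_b}  (a matrix polynomial in y) *)
Definition jet10 (K : 'M[{poly {poly C}}]_p) :
    'M[{poly C}]_(p, \sum_(j < q) \sum_(m < mult j) p) :=
  \mxrow_(j < q) \mxrow_(m < mult j)
     map_mx (fun e => ((m`!)%:R)^-1 *:
                        map_poly (fun c : {poly C} => (c^`(m)).[pts j]) e) K.

End Jets.

(* Jt_K : block (j,m),(b,l) equal to
   1/(l! m!) d_x^l d_y^m K(x,y) |_{x = xt_b, y = x_j} *)
Definition jetK (q qt : nat) (x : 'I_q -> C) (k : 'I_q -> nat)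
    (xt : 'I_qt -> C) (kt : 'I_qt -> nat) (K : 'M[{poly {poly C}}]_p) :
    'M[C]_(\sum_(j < q) \sum_(m < k j) p, \sum_(b < qt) \sum_(l < kt b) p) :=
  \mxblock_(j < q, b < qt) \mxblock_(m < k j, l < kt b)
     map_mx (fun e => ((l`!)%:R)^-1 * ((m`!)%:R)^-1 *
          horner ((map_poly (fun c : {poly C} => c^`(l)) (e^`(m))).[(x j)%:P])
                 (xt b))
       K.

Definition betaMx (q qt : nat) (k : 'I_q -> nat) (kt : 'I_qt -> nat)
    (beta : 'I_qt -> 'I_q -> nat -> nat -> 'M[C]_p) :
    'M[C]_(\sum_(b < qt) \sum_(l < kt b) p, \sum_(j < q) \sum_(m < k j) p) :=
  \mxblock_(b < qt, j < q) \mxblock_(l < kt b, m < k j) beta b j l m.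

Definition deltaD (l : nat) (a : C) (f : {poly C}) : C :=
  (-1) ^+ l * (f^`(l)).[a].

Definition betaFun (q qt : nat) (xt : 'I_qt -> C) (kt : 'I_qt -> nat)
    (beta : 'I_qt -> 'I_q -> nat -> nat -> 'M[C]_p) (j : 'I_q) (m : nat)
    (f : {poly C}) : 'M[C]_p :=
  \sum_(b < qt) \sum_(l < kt b)
     (((-1) ^+ l / (l`!)%:R) * deltaD l (xt b) f) *: beta b j l m.

(* linear independence of the matrix functionals (beta^{(j)}_m)_x, on the
   right and on the left.  A matrix of functionals is zero iff it vanishes
   on every polynomial. *)
Definition beta_lin_indep (q qt : nat) (k : 'I_q -> nat)
    (xt : 'I_qt -> C) (kt : 'I_qt -> nat)
    (beta : 'I_qt -> 'I_q -> nat -> nat -> 'M[C]_p) : Prop :=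
  (forall X : 'I_q -> nat -> 'M[C]_p,
     (forall f : {poly C},
        \sum_(j < q) \sum_(m < k j) (betaFun xt kt beta j m f *m X j m) = 0) ->
     forall (j : 'I_q) (m : nat), (m < k j)%N -> X j m = 0)
  /\
  (forall Y : 'I_q -> nat -> 'M[C]_p,
     (forall f : {poly C},
        \sum_(j < q) \sum_(m < k j) (Y j m *m betaFun xt kt beta j m f) = 0) ->
     forall (j : 'I_q) (m : nat), (m < k j)%N -> Y j m = 0).

Definition nodePoly (q : nat) (pts : 'I_q -> C) (mult : 'I_q -> nat)
  : {poly C} := \prod_(j < q) ('X - (pts j)%:P) ^+ mult j.

Definition in_ideal (q : nat) (pts : 'I_q -> C) (mult : 'I_q -> nat)
  (P : 'M[{poly C}]_p) : Prop :=
  exists Rm : 'M[{poly C}]_p, P = nodePoly pts mult *: Rm.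

Definition perpR_trivial (B : 'M[{poly C}]_p -> 'M[{poly C}]_p -> 'M[C]_p)
  (S : 'M[{poly C}]_p -> Prop) : Prop :=
  forall Q, (forall P, S P -> B P Q = 0) -> Q = 0.

Definition perpL_trivial (B : 'M[{poly C}]_p -> 'M[{poly C}]_p -> 'M[C]_p)
  (S : 'M[{poly C}]_p -> Prop) : Prop :=
  forall Q, (forall P, S P -> B Q P = 0) -> Q = 0.

End Defs.

(* Main.v *)
Require Import Defs.
From mathcomp Require Import all_boot all_algebra.
From mathcomp Require Import complex reals.
From mathcomp Require Import ring.
Set Implicit Arguments.
Unset Strict Implicit.
Unset Printing Implicit Defensive.
Import GRing.Theory Num.Theory.
Local Open Scope ring_scope.

Section Forms.
Variables (C : fieldType) (p : nat).
Local Notation cM := (map_mx (@polyC C)).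
Local Notation PM := ('M[{poly C}]_p).
Local Notation form := (PM -> PM -> 'M[C]_p).

Definition Xm (a : nat) (D : 'M[C]_p) : PM := 'X^a *: cM D.

Definition bilin (B : form) :=
  [/\ forall P P' Q, B (P + P') Q = B P Q + B P' Q,
      forall P Q Q', B P (Q + Q') = B P Q + B P Q',
      forall A P Q, B (cM A *m P) Q = A *m B P Q &
      forall A P Q, B P (cM A *m Q) = B P Q *m A^T].

Lemma cM_Xm A a D : cM A *m Xm a D = Xm a (A *m D).
Proof. by rewrite /Xm -scalemxAr map_mxM. Qed.

Lemma Xm_mul a D : Xm a D = cM D *m ('X^a)%:M.
Proof. by rewrite /Xm mul_mx_scalar. Qed.

Lemma Xm1 a : Xm a 1%:M = ('X^a)%:M.
Proof. by rewrite Xm_mul map_mx1 mul1mx. Qed.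

Lemma Xm0 a : Xm a 0 = 0.
Proof. by rewrite /Xm map_mx0 scaler0. Qed.

Lemma XmD a D E : Xm a (D + E) = Xm a D + Xm a E.
Proof. by rewrite /Xm map_mxD scalerDr. Qed.

Section Bil.
Variable B : form.
Hypothesis hB : bilin B.

Lemma bil0l Q : B 0 Q = 0.
Proof.
case: hB => _ _ hl _; have := hl 0 0 Q.
by rewrite map_mx0 mul0mx mul0mx.
Qed.

Lemma bil0r P : B P 0 = 0.
Proof.
case: hB => _ _ _ hr; have := hr 0 P 0.
by rewrite map_mx0 mul0mx trmx0 mulmx0.
Qed.

Lemma bilDl P P' Q : B (P + P') Q = B P Q + B P' Q.
Proof. by case: hB. Qed.
Lemma bilDr P Q Q' : B P (Q + Q') = B P Q + B P Q'.
Proof. by case: hB. Qed.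
Lemma bilMl A P Q : B (cM A *m P) Q = A *m B P Q.
Proof. by case: hB. Qed.
Lemma bilMr A P Q : B P (cM A *m Q) = B P Q *m A^T.
Proof. by case: hB. Qed.

Lemma bilNl P Q : B (- P) Q = - B P Q.
Proof. by apply/eqP; rewrite -subr_eq0 opprK -bilDl addNr bil0l. Qed.
Lemma bilNr P Q : B P (- Q) = - B P Q.
Proof. by apply/eqP; rewrite -subr_eq0 opprK -bilDr addNr bil0r. Qed.
Lemma bilBl P P' Q : B (P - P') Q = B P Q - B P' Q.
Proof. by rewrite bilDl bilNl. Qed.
Lemma bilBr P Q Q' : B P (Q - Q') = B P Q - B P Q'.
Proof. by rewrite bilDr bilNr. Qed.

Lemma bil_suml (I : Type) (r : seq I) (P : pred I) F Q :
  B (\sum_(i <- r | P i) F i) Q = \sum_(i <- r | P i) B (F i) Q.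
Proof. exact: (big_morph (B^~ Q) (fun x y => bilDl x y Q) (bil0l Q)). Qed.
Lemma bil_sumr (I : Type) (r : seq I) (P : pred I) F Q :
  B Q (\sum_(i <- r | P i) F i) = \sum_(i <- r | P i) B Q (F i).
Proof. exact: (big_morph (B Q) (fun x y => bilDr Q x y) (bil0r Q)). Qed.

Lemma bilXm a D b E : B (Xm a D) (Xm b E) = D *m moment B a b *m E^T.
Proof. by rewrite !Xm_mul bilMl bilMr mulmxA. Qed.

Lemma bilXm1 a D b : B (Xm a D) ('X^b)%:M = D *m moment B a b.
Proof. by rewrite -Xm1 bilXm trmx1 mulmx1. Qed.

Lemma polOfE S n : polOf S n = \sum_(j < n.+1) Xm j (S n j).
Proof. by []. Qed.

Lemma gauss_orth S1 S2 H :
  gauss_factorization (moment B) S1 S2 H ->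
  forall n m, B (polOf S1 n) (polOf S2 m) = if n == m then H n else 0.
Proof.
case=> _ _ h n m; rewrite -h !polOfE bil_suml; apply: eq_bigr => a _.
by rewrite bil_sumr; apply: eq_bigr => b _; rewrite bilXm.
Qed.

Lemma polOf_top S n : S n n = 1%:M ->
  polOf S n = ('X^n)%:M + \sum_(c < n) Xm c (S n c).
Proof. by move=> h; rewrite polOfE big_ord_recr /= h Xm1 addrC. Qed.

Lemma orth_X S n Q : (forall i, S i i = 1%:M) ->
  (forall i, (i < n)%N -> B Q (polOf S i) = 0) ->
  forall b, (b < n)%N -> B Q ('X^b)%:M = 0.
Proof.
move=> hS hQ; elim/ltn_ind => b IH hb.
have := hQ b hb; rewrite polOf_top // bilDr bil_sumr big1 ?addr0 //.
move=> [c hc] _ /=; rewrite Xm_mul bilMr IH ?mul0mx //.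
exact: ltn_trans hb.
Qed.

Lemma orth_Xtop S n Q : (forall i, S i i = 1%:M) ->
  (forall b, (b < n)%N -> B Q ('X^b)%:M = 0) ->
  B Q (polOf S n) = B Q ('X^n)%:M.
Proof.
move=> hS hQ; rewrite polOf_top // bilDr bil_sumr big1 ?addr0 //.
by move=> [c hc] _ /=; rewrite Xm_mul bilMr hQ ?mul0mx.
Qed.

End Bil.

Definition spanlt n (P : PM) := exists D : nat -> 'M[C]_p,
  P = \sum_(a < n) Xm a (D a).

Lemma spanlt0 n : spanlt n 0.
Proof. by exists (fun _ => 0); rewrite big1 // => a _; rewrite Xm0. Qed.

Lemma spanltD n P Q : spanlt n P -> spanlt n Q -> spanlt n (P + Q).
Proof.
move=> [D ->] [E ->]; exists (fun a => D a + E a).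
by rewrite -big_split; apply: eq_bigr => a _; rewrite XmD.
Qed.

Lemma spanltM n A P : spanlt n P -> spanlt n (cM A *m P).
Proof.
move=> [D ->]; exists (fun a => A *m D a); rewrite mulmx_sumr.
by apply: eq_bigr => a _; rewrite cM_Xm.
Qed.

Lemma spanltN n P : spanlt n P -> spanlt n (- P).
Proof.
move=> h; have := spanltM (- 1%:M) h.
by rewrite map_mxN map_mx1 mulNmx mul1mx.
Qed.

Lemma spanltB n P Q : spanlt n P -> spanlt n Q -> spanlt n (P - Q).
Proof. by move=> hP hQ; apply: spanltD => //; apply: spanltN. Qed.

Lemma spanlt_sum n (I : Type) (r : seq I) (P : pred I) F :
  (forall i, P i -> spanlt n (F i)) -> spanlt n (\sum_(i <- r | P i) F i).
Proof.
move=> h; elim/big_rec: _ => [|i y Pi hy]; first exact: spanlt0.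
by apply: spanltD => //; apply: h.
Qed.

Lemma spanlt_Xm n a D : (a < n)%N -> spanlt n (Xm a D).
Proof.
move=> ha; exists (fun b => if b == a then D else 0).
rewrite (bigD1 (Ordinal ha)) //= eqxx big1 ?addr0 // => b hb.
by rewrite -(inj_eq val_inj) /= in hb; rewrite (negbTE hb) Xm0.
Qed.

Lemma spanlt_polOf n S j : (j < n)%N -> spanlt n (polOf S j).
Proof.
move=> hj; rewrite polOfE; apply: spanlt_sum => a _; apply: spanlt_Xm.
exact: leq_ltn_trans (ltnSE (ltn_ord a)) hj.
Qed.

Lemma spanlt_polOf_top n S : S n n = 1%:M ->
  spanlt n (polOf S n - ('X^n)%:M).
Proof.
move=> h; rewrite polOf_top // addrC addKr; apply: spanlt_sum => a _.
exact: spanlt_Xm.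
Qed.

Lemma unit_of_rowker m (A : 'M[C]_m) :
  (forall r : 'rV_m, r *m A = 0 -> r = 0) -> A \in unitmx.
Proof.
move=> h; rewrite -row_free_unit /row_free.
have K0 : kermx A = 0.
  apply/row_matrixP => i; rewrite row0; apply: h.
  by rewrite -row_mul mulmx_ker row0.
have := mxrank_ker A; rewrite K0 mxrank0 => /esym /eqP.
by rewrite subn_eq0 => hle; rewrite eqn_leq rank_leq_row hle.
Qed.

Lemma unit_of_rowkerp m (A : 'M[C]_m) : (0 < p)%N ->
  (forall r : 'M_(p, m), r *m A = 0 -> r = 0) -> A \in unitmx.
Proof.
move=> hp h; apply: unit_of_rowker => r0 hr0.
pose rr : 'M_(p, m) := \matrix_(i < p, j < m) r0 0 j.
have : rr *m A = 0.
  apply/matrixP => i j; rewrite !mxE.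
  transitivity ((r0 *m A) 0 j); last by rewrite hr0 mxE.
  rewrite mxE; apply: eq_bigr => l _; rewrite /rr; congr (_ * _); rewrite mxE //.
move/h => h0; apply/matrixP => i j; rewrite mxE.
have := congr1 (fun M : 'M_(p, m) => M (Ordinal hp) j) h0; rewrite /rr !mxE.
by rewrite (ord1 i).
Qed.

Section QD.
Variable B : form.
Hypothesis hB : bilin B.
Hypothesis qB : quasidefinite B.

Lemma qd_coef0 n (D : nat -> 'M[C]_p) :
  (forall b, (b < n)%N -> B (\sum_(a < n) Xm a (D a)) ('X^b)%:M = 0) ->
  forall a : 'I_n, D a = 0.
Proof.
move=> h a.
pose Rw : 'M_(p, \sum_(a < n) p) := \mxrow_(a < n) D a.
have hR : Rw *m (\mxblock_(a < n, b < n) moment B a b) = 0.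
  rewrite mul_mxrow_mxblock -(mxrow0 (q_ := fun _ : 'I_n => p)).
  apply: eq_mxrow => b; rewrite -[RHS](h b (ltn_ord b)) bil_suml //.
  by apply: eq_bigr => c _; rewrite bilXm1.
have hU : (\mxblock_(a < n, b < n) moment B a b) \in unitmx.
  by rewrite unitmxE unitfE; apply: qB.
have : Rw = 0 by rewrite -(mulmxK hU Rw) hR mul0mx.
by move/(congr1 (fun M => submxrow M a)); rewrite mxrowK submxrow0.
Qed.

Lemma qd_unique n P : spanlt n P ->
  (forall b, (b < n)%N -> B P ('X^b)%:M = 0) -> P = 0.
Proof.
move=> [D ->] h; have h0 := qd_coef0 h.
by rewrite big1 // => a _; rewrite h0 Xm0.
Qed.

Lemma qd_Hunit S1 S2 H : (0 < p)%N ->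
  gauss_factorization (moment B) S1 S2 H -> forall i, H i \in unitmx.
Proof.
move=> hp g i; have g' := g; case: g' => hd _ _.
apply: unit_of_rowkerp => // r hr.
pose Q := cM r *m polOf S1 i.
have hQ : forall j, (j < i.+1)%N -> B Q (polOf S2 j) = 0.
  move=> j hj; rewrite bilMl // (gauss_orth hB g).
  by case: (i =P j) => [_|_]; rewrite ?hr ?mulmx0.
have hX := orth_X hB (fun j => proj2 (hd j)) hQ.
have E : Q = \sum_(a < i.+1) Xm a (r *m S1 i a).
  by rewrite /Q polOfE mulmx_sumr; apply: eq_bigr => a _; rewrite cM_Xm.
rewrite E in hX; have := @qd_coef0 i.+1 (fun a => r *m S1 i a) hX ord_max.
by rewrite /= (proj1 (hd i)) mulmx1.
Qed.

End QD.

Definition trB (B : form) : form := fun P Q => (B Q P)^T.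

Lemma bilin_tr B : bilin B -> bilin (trB B).
Proof.
move=> hB; split=> *; rewrite /trB.
- by rewrite bilDr // linearD.
- by rewrite bilDl // linearD.
- by rewrite bilMr // trmx_mul trmxK.
- by rewrite bilMl // trmx_mul.
Qed.

Lemma gauss_tr B S1 S2 H : gauss_factorization (moment B) S1 S2 H ->
  gauss_factorization (moment (trB B)) S2 S1 (fun n => (H n)^T).
Proof.
case=> h1 h2 h3; split.
- by move=> n; case: (h1 n).
- by move=> n m /h2 [].
move=> n m; rewrite eq_sym; have := congr1 trmx (h3 m n).
rewrite [in RHS]fun_if trmx0 => E.
transitivity (if m == n then (H m)^T else 0); last by case: eqP => // ->.
rewrite -E exchange_big linear_sum.
apply: eq_bigr => a _; rewrite linear_sum; apply: eq_bigr => b _.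
by rewrite /= /moment /trB !trmx_mul trmxK mulmxA.
Qed.

Lemma qd_tr B : quasidefinite B -> quasidefinite (trB B).
Proof.
move=> h n; have := h n; rewrite -det_tr tr_mxblock. exact.
Qed.

End Forms.

Section Core.
Variables (C : fieldType) (p N1 N2 : nat).
Local Notation cM := (map_mx (@polyC C)).
Local Notation PM := ('M[{poly C}]_p).
Variables (B0 B : PM -> PM -> 'M[C]_p).
Variables (J1 : PM -> 'M[C]_(p, N1)) (J2 : PM -> 'M[C]_(p, N2)).
Variable bb : 'M[C]_(N1, N2).
Hypothesis hp : (0 < p)%N.
Hypothesis hB0 : bilin B0.
Hypothesis J1D : forall P Q, J1 (P + Q) = J1 P + J1 Q.
Hypothesis J1M : forall A P, J1 (cM A *m P) = A *m J1 P.
Hypothesis J2D : forall P Q, J2 (P + Q) = J2 P + J2 Q.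
Hypothesis J2M : forall A P, J2 (cM A *m P) = A *m J2 P.
Hypothesis hBv : forall P Q, B P Q = B0 P Q + J1 P *m bb *m (J2 Q)^T.
Hypothesis q0 : quasidefinite B0.
Hypothesis qB : quasidefinite B.
Variables (S1 S2 : nat -> nat -> 'M[C]_p) (H : nat -> 'M[C]_p).
Variables (S1h S2h : nat -> nat -> 'M[C]_p) (Hh : nat -> 'M[C]_p).
Hypothesis g0 : gauss_factorization (moment B0) S1 S2 H.
Hypothesis gh : gauss_factorization (moment B) S1h S2h Hh.

Lemma J1_0 : J1 0 = 0.
Proof. by have := J1M 0 0; rewrite map_mx0 mul0mx mul0mx. Qed.
Lemma J2_0 : J2 0 = 0.
Proof. by have := J2M 0 0; rewrite map_mx0 mul0mx mul0mx. Qed.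
Lemma J1N P : J1 (- P) = - J1 P.
Proof. by have := J1M (- 1%:M) P; rewrite map_mxN map_mx1 !mulNmx !mul1mx. Qed.
Lemma J2N P : J2 (- P) = - J2 P.
Proof. by have := J2M (- 1%:M) P; rewrite map_mxN map_mx1 !mulNmx !mul1mx. Qed.
Lemma J1B P Q : J1 (P - Q) = J1 P - J1 Q.
Proof. by rewrite J1D J1N. Qed.
Lemma J1_sum (I : Type) (r : seq I) (P : pred I) F :
  J1 (\sum_(i <- r | P i) F i) = \sum_(i <- r | P i) J1 (F i).
Proof. exact: (big_morph J1 J1D J1_0). Qed.

Lemma bilinB : bilin B.
Proof.
split=> *; rewrite !hBv.
- by rewrite bilDl // J1D !mulmxDl addrACA.
- by rewrite bilDr // J2D linearD /= !mulmxDr addrACA.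
- by rewrite bilMl // J1M mulmxDr !mulmxA.
- by rewrite bilMr // J2M trmx_mul mulmxDl !mulmxA.
Qed.

Lemma S2diag i : S2 i i = 1%:M. Proof. by case: g0 => h _ _; case: (h i). Qed.
Lemma S1diag i : S1 i i = 1%:M. Proof. by case: g0 => h _ _; case: (h i). Qed.
Lemma S2hdiag i : S2h i i = 1%:M. Proof. by case: gh => h _ _; case: (h i). Qed.
Lemma S1hdiag i : S1h i i = 1%:M. Proof. by case: gh => h _ _; case: (h i). Qed.

Lemma Hunit i : H i \in unitmx.
Proof. exact: (qd_Hunit hB0 q0 hp g0). Qed.

Variable N : nat.

Definition Kx : 'M[{poly C}]_(N2, p) := \sum_(j < N.+1)
  cM ((J2 (polOf S2 j))^T *m invmx (H j)) *m polOf S1 j.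
Definition JK : 'M[C]_(N2, N1) := \sum_(j < N.+1)
  (J2 (polOf S2 j))^T *m invmx (H j) *m J1 (polOf S1 j).

Lemma J1_Kx A : J1 (cM A *m Kx) = A *m JK.
Proof.
rewrite /Kx /JK mulmx_sumr J1_sum mulmx_sumr; apply: eq_bigr => j _.
by rewrite mulmxA -map_mxM J1M !mulmxA.
Qed.

Lemma B0_Kx A i : B0 (cM A *m Kx) (polOf S2 i) =
  if (i < N.+1)%N then A *m (J2 (polOf S2 i))^T else 0.
Proof.
rewrite /Kx mulmx_sumr bil_suml //.
under eq_bigr => j _ do rewrite mulmxA -map_mxM bilMl // (gauss_orth hB0 g0).
case: ifP => hi.
  rewrite (bigD1 (Ordinal hi)) //= eqxx.
  rewrite [X in _ + X]big1 ?addr0; first by rewrite -!mulmxA mulVmx ?Hunit // mulmx1.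
  move=> j hj; case: eqP => [e|_]; last by rewrite mulmx0.
  by move: hj; rewrite (_ : j = Ordinal hi) ?eqxx //; apply: val_inj.
rewrite big1 // => j _; case: eqP => [e|_]; last by rewrite mulmx0.
by move: (ltn_ord j); rewrite e hi.
Qed.

Lemma spanlt_Kx A : spanlt N.+1 (cM A *m Kx).
Proof.
rewrite /Kx mulmx_sumr; apply: spanlt_sum => j _.
by rewrite mulmxA -map_mxM; apply: spanltM; apply: spanlt_polOf.
Qed.

Lemma core_unit : 1%:M + bb *m JK \in unitmx.
Proof.
apply: (unit_of_rowkerp hp) => r hr.
pose Q := cM (r *m bb) *m Kx.
have e1 : r *m bb *m JK = - r.
  by apply/eqP; rewrite -addr_eq0 addrC -mulmxA -{1}(mulmx1 r) -mulmxDr hr.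
have hQ : forall i, (i < N.+1)%N -> B Q (polOf S2 i) = 0.
  move=> i hi; rewrite hBv B0_Kx hi J1_Kx e1.
  by rewrite !mulNmx addrN.
have hX := orth_X bilinB S2diag hQ.
have Q0 := qd_unique bilinB qB (spanlt_Kx (r *m bb)) hX.
have := J1_Kx (r *m bb); rewrite Q0 J1_0 e1 => /eqP.
by rewrite eq_sym oppr_eq0 => /eqP.
Qed.

Definition Mc := invmx (1%:M + bb *m JK).

Lemma Mc_eq : Mc + Mc *m bb *m JK = 1%:M.
Proof.
by rewrite -mulmxA -{1}(mulmx1 Mc) -mulmxDr mulVmx // core_unit.
Qed.

Lemma core_P1 :
  polOf S1h N.+1 = polOf S1 N.+1
    - cM (J1 (polOf S1 N.+1) *m Mc *m bb) *m Kx.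
Proof.
set T := J1 (polOf S1 N.+1).
set Q := _ - _.
have hQ : forall i, (i < N.+1)%N -> B Q (polOf S2 i) = 0.
  move=> i hi; rewrite hBv bilBl // B0_Kx hi (gauss_orth hB0 g0).
  rewrite ifN; last by apply/eqP => e; move: hi; rewrite -e ltnn.
  rewrite J1B J1_Kx.
  set J := (J2 _)^T.
  have e : T *m bb *m J - T *m Mc *m bb *m JK *m bb *m J
           = T *m Mc *m bb *m J.
    apply/eqP; rewrite subr_eq -!mulmxA -mulmxDr; apply/eqP; congr (_ *m _).
    rewrite !mulmxA -mulmxDl; congr (_ *m _).
    rewrite -{1}(mul1mx bb) -Mc_eq mulmxDl; congr (_ + _).
  by rewrite -/T mulmxBl mulmxBl e addrC addrA addr0 subrr.
have hX := orth_X bilinB S2diag hQ.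
have hXh : forall b, (b < N.+1)%N -> B (polOf S1h N.+1) ('X^b)%:M = 0.
  apply: (orth_X bilinB S2hdiag) => i hi.
  rewrite (gauss_orth bilinB gh) ifN //.
  by apply/eqP => e; move: hi; rewrite -e ltnn.
have sp : spanlt N.+1 (polOf S1h N.+1 - Q).
  have -> : polOf S1h N.+1 - Q =
    (polOf S1h N.+1 - ('X^(N.+1))%:M) - (Q - ('X^(N.+1))%:M).
    by rewrite [in RHS]opprB subrKA.
  apply: spanltB; first by apply: spanlt_polOf_top; rewrite S1hdiag.
  rewrite /Q addrAC; apply: spanltB; last exact: spanlt_Kx.
  by apply: spanlt_polOf_top; rewrite S1diag.
have := qd_unique bilinB qB sp.
move=> h; apply/eqP; rewrite -subr_eq0; apply/eqP; apply: h => b hb.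
by rewrite (bilBl bilinB) hXh // hX // subrr.
Qed.

Lemma core_H :
  Hh N.+1 = H N.+1 + J1 (polOf S1 N.+1) *m Mc *m bb
                       *m (J2 (polOf S2 N.+1))^T.
Proof.
have hXh : forall b, (b < N.+1)%N -> B (polOf S1h N.+1) ('X^b)%:M = 0.
  apply: (orth_X bilinB S2hdiag) => i hi.
  rewrite (gauss_orth bilinB gh) ifN //.
  by apply/eqP => e; move: hi; rewrite -e ltnn.
have := gauss_orth bilinB gh N.+1 N.+1; rewrite eqxx => <-.
rewrite (orth_Xtop bilinB S2hdiag hXh) -(orth_Xtop bilinB S2diag hXh).
rewrite hBv core_P1 bilBl // B0_Kx ltnn subr0 (gauss_orth hB0 g0) eqxx.
congr (_ + _); congr (_ *m _ *m _).
rewrite J1B J1_Kx -{1}(mulmx1 (J1 _)) -Mc_eq mulmxDr.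
by rewrite !mulmxA addrK.
Qed.

Lemma core_all : [/\ 1%:M + bb *m JK \in unitmx,
  polOf S1h N.+1 = polOf S1 N.+1
    - cM (J1 (polOf S1 N.+1) *m invmx (1%:M + bb *m JK) *m bb) *m Kx &
  Hh N.+1 = H N.+1 + J1 (polOf S1 N.+1) *m invmx (1%:M + bb *m JK) *m bb
                       *m (J2 (polOf S2 N.+1))^T].
Proof. by split; [exact: core_unit | exact: core_P1 | exact: core_H]. Qed.

End Core.

Section FormU.
Variables (C : fieldType) (p : nat).
Local Notation cM := (map_mx (@polyC C)).
Local Notation PM := ('M[{poly C}]_p).

Definition coefm (P : PM) (a : nat) : 'M[C]_p := map_mx (fun e : {poly C} => e`_a) P.

Lemma coefmD P Q a : coefm (P + Q) a = coefm P a + coefm Q a.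
Proof. by apply/matrixP => i j; rewrite !mxE coefD. Qed.

Lemma coefmM A P a : coefm (cM A *m P) a = A *m coefm P a.
Proof.
apply/matrixP => i j; rewrite !mxE coef_sum; apply: eq_bigr => k _.
by rewrite !mxE coefCM.
Qed.

Definition bnd d (P : PM) := forall j, (d <= j)%N -> coefm P j = 0.

Lemma bnd_le d d' P : (d <= d')%N -> bnd d P -> bnd d' P.
Proof. by move=> h hP j hj; apply: hP; apply: leq_trans hj. Qed.

Lemma bndD d P Q : bnd d P -> bnd d Q -> bnd d (P + Q).
Proof. by move=> hP hQ j hj; rewrite coefmD hP ?hQ ?addr0. Qed.

Lemma bndM d A P : bnd d P -> bnd d (cM A *m P).
Proof. by move=> hP j hj; rewrite coefmM hP ?mulmx0. Qed.

Lemma bnd_ex P : exists d, bnd d P.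
Proof.
exists (\max_(ik : 'I_p * 'I_p) size (P ik.1 ik.2)) => j hj.
apply/matrixP => i k; rewrite !mxE; apply: nth_default.
apply: leq_trans hj; exact: (leq_bigmax (i, k)).
Qed.

Lemma bnd_size d P i k : bnd d P -> (size (P i k) <= d)%N.
Proof.
move=> h; apply/leq_sizeP => j hj.
by have := congr1 (fun M : 'M_p => M i k) (h j hj); rewrite !mxE.
Qed.

Lemma sum_widen (V : zmodType) (s d : nat) (f : nat -> V) : (s <= d)%N ->
  (forall a, (s <= a)%N -> f a = 0) ->
  \sum_(a < s) f a = \sum_(a < d) f a.
Proof.
move=> hsd hf; rewrite (big_ord_widen d f hsd) big_mkcond /=.
by apply: eq_bigr => a _; case: ifP => // /negbT; rewrite -leqNgt => /hf ->.
Qed.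

Lemma formU1 (G : nat -> nat -> 'M[C]_p) (k l : 'I_p) (f g : {poly C}) d :
  (size f <= d)%N -> (size g <= d)%N ->
  \sum_(a < size f) \sum_(b < size g) f`_a * G a b k l * g`_b
  = \sum_(a < d) \sum_(b < d) f`_a * G a b k l * g`_b.
Proof.
move=> hf hg.
rewrite (@sum_widen _ _ d (fun a => \sum_(b < size g) f`_a * G a b k l * g`_b)) //;
  last by move=> a ha; rewrite big1 // => b _; rewrite nth_default // !mul0r.
apply: eq_bigr => a _.
rewrite (@sum_widen _ _ d (fun b => f`_a * G a b k l * g`_b)) //.
by move=> b hb; rewrite [g`_b]nth_default // mulr0.
Qed.

Lemma entry3 n m (A : 'M[C]_(n, m)) (B : 'M[C]_m) (D : 'M[C]_(n, m)) i j :
  (A *m B *m D^T) i j = \sum_k \sum_l A i k * B k l * D j l.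
Proof.
rewrite !mxE; under eq_bigr => l _ do rewrite !mxE big_distrl.
by rewrite exchange_big.
Qed.

Lemma formU_exp G P Q d : bnd d P -> bnd d Q ->
  formU G P Q = \sum_(a < d) \sum_(b < d)
                  coefm P a *m G a b *m (coefm Q b)^T.
Proof.
move=> hP hQ; apply/matrixP => i j; rewrite !mxE summxE.
under [RHS]eq_bigr => a _ do rewrite summxE.
under [LHS]eq_bigr => k _ do under eq_bigr => l _ do
  rewrite (formU1 G k l (bnd_size i k hP) (bnd_size j l hQ)).
under [RHS]eq_bigr => a _ do under eq_bigr => b _ do rewrite entry3.
under [LHS]eq_bigr => k _ do rewrite exchange_big.
under [LHS]eq_bigr => k _ do under eq_bigr => a _ do rewrite exchange_big.
rewrite exchange_big; apply: eq_bigr => a _.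
rewrite exchange_big; apply: eq_bigr => b _.
apply: eq_bigr => k _; apply: eq_bigr => l _.
by rewrite !mxE.
Qed.

Lemma bnd_max2 P Q : exists d, bnd d P /\ bnd d Q.
Proof.
have [d1 h1] := bnd_ex P; have [d2 h2] := bnd_ex Q.
exists (maxn d1 d2); split; [apply: bnd_le h1 | apply: bnd_le h2];
  by rewrite ?leq_maxl ?leq_maxr.
Qed.

Lemma bnd_max3 P Q R : exists d, [/\ bnd d P, bnd d Q & bnd d R].
Proof.
have [d1 [h1 h2]] := bnd_max2 P Q; have [d2 h3] := bnd_ex R.
exists (maxn d1 d2); split; [apply: bnd_le h1 | apply: bnd_le h2 |
  apply: bnd_le h3]; by rewrite ?leq_maxl ?leq_maxr.
Qed.

Lemma bilin_formU (G : nat -> nat -> 'M[C]_p) : bilin (@formU C p G).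
Proof.
split.
- move=> P P' Q; have [d [h1 h2 h3]] := bnd_max3 P P' Q.
  rewrite !(formU_exp G _ h3) //; last exact: bndD.
  rewrite -big_split; apply: eq_bigr => a _; rewrite -big_split.
  by apply: eq_bigr => b _; rewrite coefmD !mulmxDl.
- move=> P Q Q'; have [d [h1 h2 h3]] := bnd_max3 Q Q' P.
  rewrite !(formU_exp G h3) //; last exact: bndD.
  rewrite -big_split; apply: eq_bigr => a _; rewrite -big_split.
  by apply: eq_bigr => b _; rewrite coefmD linearD /= !mulmxDr.
- move=> A P Q; have [d [h1 h2]] := bnd_max2 P Q.
  rewrite !(formU_exp G _ h2) //; last exact: bndM.
  rewrite mulmx_sumr; apply: eq_bigr => a _; rewrite mulmx_sumr.
  by apply: eq_bigr => b _; rewrite coefmM !mulmxA.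
- move=> A P Q; have [d [h1 h2]] := bnd_max2 P Q.
  rewrite !(formU_exp G h1) //; last exact: bndM.
  rewrite mulmx_suml; apply: eq_bigr => a _; rewrite mulmx_suml.
  by apply: eq_bigr => b _; rewrite coefmM trmx_mul !mulmxA.
Qed.

End FormU.

Section Jet.
Variables (C : fieldType) (p : nat).
Local Notation cM := (map_mx (@polyC C)).
Local Notation PM := ('M[{poly C}]_p).

Lemma mderivD l (P Q : PM) a :
  mderiv_at l (P + Q) a = mderiv_at l P a + mderiv_at l Q a.
Proof. by apply/matrixP => i j; rewrite !mxE derivnD hornerD. Qed.

Lemma mderivM l A (P : PM) a :
  mderiv_at l (cM A *m P) a = A *m mderiv_at l P a.
Proof.
apply/matrixP => i j; rewrite !mxE raddf_sum horner_sum.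
by apply: eq_bigr => k _; rewrite !mxE /= mul_polyC derivnZ hornerZ.
Qed.

Variables (q : nat) (pts : 'I_q -> C) (mult : 'I_q -> nat).

Lemma jetRowD (P Q : PM) :
  jetRow pts mult (P + Q) = jetRow pts mult P + jetRow pts mult Q.
Proof.
rewrite /jetRow -mxrowD; apply: eq_mxrow => j; rewrite -mxrowD.
by apply: eq_mxrow => m; rewrite mderivD scalerDr.
Qed.

Lemma jetRowM A (P : PM) :
  jetRow pts mult (cM A *m P) = A *m jetRow pts mult P.
Proof.
rewrite /jetRow mul_mxrow; apply: eq_mxrow => j; rewrite mul_mxrow.
by apply: eq_mxrow => m; rewrite mderivM scalemxAr.
Qed.

End Jet.

Section FormV.
Variables (C : fieldType) (p q qt : nat).
Variables (x : 'I_q -> C) (k : 'I_q -> nat) (xt : 'I_qt -> C) (kt : 'I_qt -> nat).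
Variable beta : 'I_qt -> 'I_q -> nat -> nat -> 'M[C]_p.

Lemma formV_jet (P Q : 'M[{poly C}]_p) :
  formV x k xt kt beta P Q =
  jetRow xt kt P *m betaMx k kt beta *m (jetRow x k Q)^T.
Proof.
rewrite /jetRow /betaMx mul_mxrow_mxblock tr_mxrow mul_mxrow_mxcol.
under [RHS]eq_bigr => j _ do rewrite mulmx_suml.
rewrite [RHS]exchange_big /formV; apply: eq_bigr => b _.
rewrite exchange_big; apply: eq_bigr => j _.
rewrite mul_mxrow_mxblock tr_mxrow mul_mxrow_mxcol exchange_big.
apply: eq_bigr => l _; rewrite mulmx_suml; apply: eq_bigr => m _.
by rewrite linearZ /= -scalemxAl -scalemxAr -scalemxAl scalerA mulrC.
Qed.
End FormV.

Section KJ.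
Variables (C : fieldType) (p : nat).
Local Notation cM := (map_mx (@polyC C)).
Local Notation PM := ('M[{poly C}]_p).

Definition gen (f g : {poly C}) : {poly {poly C}} := map_poly polyC f * g%:P.

Definition Kt (Q : PM) (A : 'M[C]_p) (P : PM) : 'M[{poly {poly C}}]_p :=
  (liftY Q)^T *m map_mx (fun c => c%:P%:P) A *m liftX P.

Lemma Kt_entry Q A P i l :
  Kt Q A P i l = \sum_k' \sum_k gen (Q k i) ((A k k')%:P * P k' l).
Proof.
rewrite /Kt !mxE; apply: eq_bigr => k' _; rewrite !mxE big_distrl.
by apply: eq_bigr => k _; rewrite !mxE /gen polyCM mulrA.
Qed.

Lemma gen_eq f g : gen f g = g *: map_poly polyC f.
Proof. by rewrite /gen mulrC mul_polyC. Qed.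

Lemma derivn_gen m f g : (gen f g)^`(m) = gen (f^`(m)) g.
Proof. by rewrite !gen_eq derivnZ derivn_map. Qed.

Lemma horner_gen f g a : (gen f g).[a%:P] = (f.[a])%:P * g.
Proof. by rewrite gen_eq hornerZ horner_map mulrC. Qed.

Lemma der0 l : (0 : {poly C})^`(l) = 0.
Proof. exact: raddf0. Qed.

Lemma mp_gen1 l f g :
  map_poly (fun c : {poly C} => c^`(l)) (gen f g) = gen f (g^`(l)).
Proof.
apply/polyP => i; rewrite coef_map_id0 ?der0 // /gen !coefMC coef_map /=.
by rewrite mul_polyC derivnZ mul_polyC.
Qed.

Lemma mp_gen2 m a f g :
  map_poly (fun c : {poly C} => (c^`(m)).[a]) (gen f g)
  = f * ((g^`(m)).[a])%:P.
Proof.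
apply/polyP => i; rewrite coef_map_id0 ?der0 ?horner0 // /gen !coefMC.
by rewrite coef_map /= mul_polyC derivnZ hornerZ.
Qed.

Lemma map_polyD' (R : nzRingType) (phi : {poly C} -> R)
  (hD : forall x y, phi (x + y) = phi x + phi y) (h0 : phi 0 = 0) e e' :
  map_poly phi (e + e') = map_poly phi e + map_poly phi e'.
Proof. by apply/polyP => i; rewrite coefD !coef_map_id0 // coefD hD. Qed.

Definition op01 m a (e : {poly {poly C}}) : {poly C} :=
  ((m`!)%:R)^-1 *: (e^`(m)).[a%:P].
Definition opK l m a b (e : {poly {poly C}}) : C :=
  ((l`!)%:R)^-1 * ((m`!)%:R)^-1 *
    horner ((map_poly (fun c : {poly C} => c^`(l)) (e^`(m))).[a%:P]) b.
Definition op10 m a (e : {poly {poly C}}) : {poly C} :=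
  ((m`!)%:R)^-1 *: map_poly (fun c : {poly C} => (c^`(m)).[a]) e.

Lemma op01D m a : {morph op01 m a : e e' / e + e'}.
Proof. by move=> e e'; rewrite /op01 derivnD hornerD scalerDr. Qed.
Lemma op01_0 m a : op01 m a 0 = 0.
Proof. by rewrite /op01 raddf0 horner0 scaler0. Qed.
Lemma opKD l m a b : {morph opK l m a b : e e' / e + e'}.
Proof.
move=> e e'; rewrite /opK derivnD map_polyD' ?der0 //; last exact: derivnD.
by rewrite hornerD hornerD mulrDr.
Qed.
Lemma opK0 l m a b : opK l m a b 0 = 0.
Proof.
by rewrite /opK raddf0 (map_poly0 (fun c : {poly C} => c^`(l))) horner0 horner0 mulr0.
Qed.
Lemma op10D m a : {morph op10 m a : e e' / e + e'}.
Proof.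
move=> e e'; rewrite /op10 map_polyD' ?der0 ?horner0 ?scalerDr //.
by move=> x y; rewrite derivnD hornerD.
Qed.
Lemma op10_0 m a : op10 m a 0 = 0.
Proof. by rewrite /op10 map_poly0 scaler0. Qed.

Lemma op01_gen m a f g : op01 m a (gen f g) = (((m`!)%:R)^-1 * (f^`(m)).[a])%:P * g.
Proof. by rewrite /op01 derivn_gen horner_gen -mul_polyC mulrA polyCM. Qed.

Lemma opK_gen l m a b f g : opK l m a b (gen f g) =
  ((l`!)%:R)^-1 * ((m`!)%:R)^-1 * ((f^`(m)).[a] * (g^`(l)).[b]).
Proof.
by rewrite /opK derivn_gen mp_gen1 horner_gen hornerM hornerC.
Qed.

Lemma op10_gen m a f g : op10 m a (gen f g) =
  (((m`!)%:R)^-1 * (g^`(m)).[a]) *: f.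
Proof.
by rewrite /op10 mp_gen2 mulrC -mul_polyC mulrA -polyCM mul_polyC.
Qed.

Lemma map_mxcol (T T' : Type) (f : T -> T') n (p_ : 'I_n -> nat) m
  (B_ : forall i, 'M[T]_(p_ i, m)) :
  map_mx f (\mxcol_i B_ i) = \mxcol_i map_mx f (B_ i).
Proof. by apply/matrixP => i j; rewrite !mxE. Qed.

Lemma map_mxrow (T T' : Type) (f : T -> T') n (q_ : 'I_n -> nat) m
  (B_ : forall i, 'M[T]_(m, q_ i)) :
  map_mx f (\mxrow_i B_ i) = \mxrow_i map_mx f (B_ i).
Proof. by apply/matrixP => i j; rewrite !mxE. Qed.

Section Pts.
Variables (q : nat) (pts : 'I_q -> C) (mult : 'I_q -> nat).

Lemma jet01_Kt Q A P : jet01 pts mult (Kt Q A P) =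
  cM ((jetRow pts mult Q)^T *m A) *m P.
Proof.
rewrite /jet01 /jetRow tr_mxrow mxcol_mul map_mxcol mxcol_mul.
apply: eq_mxcol => j; rewrite tr_mxrow mxcol_mul map_mxcol mxcol_mul.
apply: eq_mxcol => m; apply/matrixP => i l; rewrite mxE.
transitivity (op01 m (pts j) (Kt Q A P i l)); first by [].
rewrite Kt_entry (big_morph _ (op01D m (pts j)) (op01_0 m (pts j))) mxE.
apply: eq_bigr => k' _.
rewrite (big_morph _ (op01D m (pts j)) (op01_0 m (pts j))) !mxE rmorph_sum.
rewrite mulr_suml; apply: eq_bigr => k _.
by rewrite op01_gen /= !mxE [in RHS]polyCM mulrA.
Qed.

Lemma jet10_Kt Q A P : jet10 pts mult (Kt Q A P) =
  Q^T *m cM (A *m jetRow pts mult P).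
Proof.
rewrite /jet10 /jetRow mul_mxrow map_mxrow mul_mxrow.
apply: eq_mxrow => j; rewrite mul_mxrow map_mxrow mul_mxrow.
apply: eq_mxrow => m; apply/matrixP => i l; rewrite mxE.
transitivity (op10 m (pts j) (Kt Q A P i l)); first by [].
rewrite Kt_entry (big_morph _ (op10D m (pts j)) (op10_0 m (pts j))) mxE.
under eq_bigr => k' _ do rewrite (big_morph _ (op10D m (pts j)) (op10_0 m (pts j))).
rewrite exchange_big; apply: eq_bigr => k _; rewrite !mxE /= rmorph_sum.
rewrite mulr_sumr; apply: eq_bigr => k' _.
rewrite op10_gen /= !mxE -mul_polyC mulrC; congr (_ * _); congr (_%:P).
rewrite mul_polyC derivnZ hornerZ; ring.
Qed.

End Pts.

Lemma jetK_Kt (q qt : nat) (x : 'I_q -> C) k (xt : 'I_qt -> C) kt Q A P :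
  jetK x k xt kt (Kt Q A P) = (jetRow x k Q)^T *m A *m jetRow xt kt P.
Proof.
rewrite /jetK /jetRow tr_mxrow mxcol_mul mul_mxcol_mxrow.
apply: eq_mxblock => j b; rewrite tr_mxrow mxcol_mul mul_mxcol_mxrow.
apply: eq_mxblock => m l; apply/matrixP => i i'; rewrite mxE.
transitivity (opK l m (x j) (xt b) (Kt Q A P i i')); first by [].
rewrite Kt_entry (big_morph _ (opKD l m (x j) (xt b)) (opK0 l m (x j) (xt b))).
rewrite mxE; apply: eq_bigr => k' _.
rewrite (big_morph _ (opKD l m (x j) (xt b)) (opK0 l m (x j) (xt b))) !mxE.
rewrite mulr_suml; apply: eq_bigr => kk _.
rewrite opK_gen !mxE mul_polyC derivnZ hornerZ; ring.
Qed.

End KJ.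

Lemma add0_of (V W : zmodType) (f : V -> W)
  (h : forall a b, f (a + b) = f a + f b) : f 0 = 0.
Proof.
have := h 0 0; rewrite addr0 => /(congr1 (fun y => y - f 0)).
by rewrite addrK subrr => ->.
Qed.

Lemma push_through (C : fieldType) m n (A : 'M[C]_(m, n)) (Bm : 'M_(n, m)) :
  1%:M + A *m Bm \in unitmx -> 1%:M + Bm *m A \in unitmx ->
  invmx (1%:M + A *m Bm) *m A = A *m invmx (1%:M + Bm *m A).
Proof.
move=> U1 U2.
have e : (1%:M + A *m Bm) *m A = A *m (1%:M + Bm *m A).
  by rewrite mulmxDl mulmxDr mul1mx mulmx1 mulmxA.
have := mulmxK U2 (invmx (1%:M + A *m Bm) *m A).
by rewrite -(mulmxA (invmx _) A) -e mulmxA mulVmx // mul1mx => <-.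
Qed.

Section Jsum.
Variables (C : fieldType) (p : nat).

Lemma jet01D q (pts : 'I_q -> C) mult (K K' : 'M[{poly {poly C}}]_p) :
  jet01 pts mult (K + K') = jet01 pts mult K + jet01 pts mult K'.
Proof.
rewrite /jet01 -mxcolD; apply: eq_mxcol => j; rewrite -mxcolD.
apply: eq_mxcol => m; apply/matrixP => i l; rewrite !mxE.
exact: (op01D m (pts j)).
Qed.

Lemma jet10D q (pts : 'I_q -> C) mult (K K' : 'M[{poly {poly C}}]_p) :
  jet10 pts mult (K + K') = jet10 pts mult K + jet10 pts mult K'.
Proof.
rewrite /jet10 -mxrowD; apply: eq_mxrow => j; rewrite -mxrowD.
apply: eq_mxrow => m; apply/matrixP => i l; rewrite !mxE.
exact: (op10D m (pts j)).
Qed.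

Lemma jetKD q qt (x : 'I_q -> C) k (xt : 'I_qt -> C) kt
  (K K' : 'M[{poly {poly C}}]_p) :
  jetK x k xt kt (K + K') = jetK x k xt kt K + jetK x k xt kt K'.
Proof.
rewrite /jetK -mxblockD; apply: eq_mxblock => j b; rewrite -mxblockD.
apply: eq_mxblock => m l; apply/matrixP => i i'; rewrite !mxE.
exact: (opKD l m (x j) (xt b)).
Qed.

End Jsum.

Theorem mainTheorem10 (R : realType) (p q qt : nat)
    (x : 'I_q -> R) (k : 'I_q -> nat) (xt : 'I_qt -> R) (kt : 'I_qt -> nat)
    (beta : 'I_qt -> 'I_q -> nat -> nat -> 'M[R[i]]_p)
    (G : nat -> nat -> 'M[R[i]]_p)
    (S1 S2 : nat -> nat -> 'M[R[i]]_p) (H : nat -> 'M[R[i]]_p)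
    (S1h S2h : nat -> nat -> 'M[R[i]]_p) (Hh : nat -> 'M[R[i]]_p) :
  let xc := fun j => toC (x j) in
  let xtc := fun b => toC (xt b) in
  let u := formU G in
  let v := formV xc k xtc kt beta in
  let uh := fun P Q => u P Q + v P Q in
  (0 < p)%N ->
  injective x -> (forall j, 0 < k j)%N ->
  injective xt -> (forall b, 0 < kt b)%N ->
  quasidefinite u -> quasidefinite uh ->
  gauss_factorization (moment u) S1 S2 H ->
  gauss_factorization (moment uh) S1h S2h Hh ->
  beta_lin_indep k xtc kt beta ->
  perpR_trivial u (in_ideal xtc kt) \/ perpL_trivial u (in_ideal xc k) ->
  forall n : nat, (0 < n)%N ->
  let K := kernelK S1 S2 H n.-1 in
  let JtK := jetK xc k xtc kt K in
  let bM := betaMx k kt beta in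
  let P1 := polOf S1 n in
  let P2 := polOf S2 n in
  let M := invmx (1%:M + bM *m JtK) in
  [/\ 1%:M + JtK *m bM \in unitmx,
      1%:M + bM *m JtK \in unitmx,
      polOf S1h n
        = P1 - map_mx polyC (jetRow xtc kt P1 *m M *m bM) *m jet01 xc k K,
      (polOf S2h n)^T
        = P2^T - jet10 xtc kt K *m map_mx polyC (M *m bM *m (jetRow xc k P2)^T)
    & Hh n = H n + jetRow xtc kt P1 *m M *m bM *m (jetRow xc k P2)^T].
Proof.
move=> xc xtc u v uh hp _ _ _ _ qu quh gu guh _ _ [|N] // _.
move=> K JtK bM P1 P2 M.
set Jt := jetRow xtc kt; set J := jetRow xc k.
have hu : bilin u by exact: bilin_formU.
have hv : forall P Q, uh P Q = u P Q + Jt P *m bM *m (J Q)^T.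
  by move=> P Q; rewrite /uh /v formV_jet.
have eK : K = \sum_(j < N.+1) Kt (polOf S2 j) (invmx (H j)) (polOf S1 j).
  by [].
have e01 : jet01 xc k K = Kx J S1 S2 H N.
  rewrite eK (big_morph _ (jet01D xc k) (add0_of (jet01D xc k))).
  by apply: eq_bigr => j _; rewrite jet01_Kt.
have eJK : JtK = JK Jt J S1 S2 H N.
  rewrite /JtK eK (big_morph _ (jetKD xc k xtc kt) (add0_of (jetKD xc k xtc kt))).
  by apply: eq_bigr => j _; rewrite jetK_Kt.
have e10 : (jet10 xtc kt K)^T = Kx Jt S2 S1 (fun n => (H n)^T) N.
  rewrite eK (big_morph _ (jet10D xtc kt) (add0_of (jet10D xtc kt))).
  rewrite linear_sum; apply: eq_bigr => j _ /=.
  by rewrite jet10_Kt trmx_mul trmxK map_trmx trmx_mul trmx_inv.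
have eJK2 : JtK^T = JK J Jt S2 S1 (fun n => (H n)^T) N.
  rewrite eJK /JK linear_sum; apply: eq_bigr => j _ /=.
  by rewrite !trmx_mul trmxK trmx_inv mulmxA.
have [U1 E1 E2] := core_all hp hu (jetRowD xtc kt) (jetRowM xtc kt)
  (jetRowD xc k) (jetRowM xc k) hv qu quh gu guh N.
have hv2 : forall P Q, trB uh P Q = trB u P Q + J P *m bM^T *m (Jt Q)^T.
  by move=> P Q; rewrite /trB hv linearD /= !trmx_mul trmxK mulmxA.
have [U2 E3 _] := core_all hp (bilin_tr hu) (jetRowD xc k) (jetRowM xc k)
  (jetRowD xtc kt) (jetRowM xtc kt) hv2 (qd_tr qu) (qd_tr quh)
  (gauss_tr gu) (gauss_tr guh) N.
rewrite -eJK in U1 E1 E2; rewrite -eJK2 in U2 E3.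
have U2' : 1%:M + JtK *m bM \in unitmx.
  by rewrite -unitmx_tr linearD /= trmx_mul tr_scalar_mx.
split => //.
- by rewrite E1 e01.
- rewrite E3 -e10 linearB /= trmx_mul trmxK map_trmx.
  congr (_ - _ *m map_mx _ _); rewrite !trmx_mul trmxK trmx_inv.
  rewrite linearD /= trmx_mul !trmxK tr_scalar_mx.
  by rewrite /M push_through // mulmxA.
Qed.
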